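(* Let $\alpha>-1$, $\alpha\ne0$, and let $\eta_1=\eta_1(\alpha)\in(0,1)$ be the root of the equation $\eta^\alpha=\dfrac{1}{1+\alpha(\eta+1)}$. Define for $0\le\eta\le1$ $$\psi_0(\alpha,\eta)=\dfrac{(1+\eta^{\alpha+1})^{1/\alpha}}{(1+\eta)^{(\alpha+1)/\alpha}}+\dfrac{(\alpha+1)^{(\alpha+1)/\alpha}}{\alpha}\left[\dfrac1{1+\eta^{\alpha+1}}-\dfrac1{1+\eta}\right],\qquad \psi_1(\alpha,\eta)=2\dfrac{(1+\eta^{\alpha+1})^{1/\alpha}}{(1+\eta)^{(\alpha+1)/\alpha}},$$ and let $\psi(\alpha,\eta)=\psi_0(\alpha,\eta)$ for $0\le\eta\le\eta_1$ and $\psi(\alpha,\eta)=\psi_1(\alpha,\eta)$ for $\eta_1\le\eta\le1$. Then $$\max_{0\le\eta\le1}\psi(\alpha,\eta)=\max_{0\le\eta\le\eta_1}\psi_0(\alpha,\eta).$$ *)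

(* Defs.v *)
From mathcomp Require Import all_boot all_order all_algebra.
From mathcomp Require Import all_classical all_reals all_analysis.
Set Implicit Arguments. Unset Strict Implicit. Unset Printing Implicit Defensive.
Import Order.TTheory GRing.Theory Num.Theory.
Local Open Scope ring_scope.

Definition psi0 (R : realType) (a e : R) : R :=
  (1 + e `^ (a + 1)) `^ (1 / a) / (1 + e) `^ ((a + 1) / a)
  + (a + 1) `^ ((a + 1) / a) / a * ((1 + e `^ (a + 1))^-1 - (1 + e)^-1).

Definition psi1 (R : realType) (a e : R) : R :=
  2 * ((1 + e `^ (a + 1)) `^ (1 / a) / (1 + e) `^ ((a + 1) / a)).

(* psi(alpha, eta) = psi0 on [0, eta1], psi1 on (eta1, 1]; at eta = eta1 we
   take psi0 (the paper's definition is piecewise with eta1 in both pieces). *)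
Definition psi (R : realType) (a eta1 e : R) : R :=
  if e <= eta1 then psi0 a e else psi1 a e.

(* Main.v *)
Require Import Defs.
From mathcomp Require Import all_boot all_order all_algebra.
From mathcomp Require Import all_classical all_reals all_analysis.
From mathcomp Require Import ring lra.
Set Implicit Arguments. Unset Strict Implicit.
Import Order.TTheory GRing.Theory Num.Theory.
Import numFieldNormedType.Exports.
Local Open Scope ring_scope.
Local Open Scope classical_set_scope.
Lemma conv_pow (R : realType) (p l x y : R) : 1 <= p -> 0 <= l -> l <= 1 -> 0 <= x -> 0 <= y ->
  (l * x + (1 - l) * y) `^ p <= l * x `^ p + (1 - l) * y `^ p.
Proof.
move=> p1 l0 l1 x0 y0.
have := @convex_powR R p p1 (Itv01 l0 l1) x y.
rewrite !inE /= !in_itv /= !andbT => /(_ x0 y0).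
by rewrite !convRE.
Qed.

Lemma conc_pow (R : realType) (p l x y : R) : 0 < p -> p <= 1 -> 0 <= l -> l <= 1 -> 0 <= x -> 0 <= y ->
  l * x `^ p + (1 - l) * y `^ p <= (l * x + (1 - l) * y) `^ p.
Proof.
move=> p0 p1 l0 l1 x0 y0.
have q1 : 1 <= p^-1 by rewrite invf_ge1.
have := conv_pow q1 l0 l1 (powR_ge0 x p) (powR_ge0 y p).
rewrite -!powRrM !mulfV ?gt_eqF // !powRr1 // => H.
have := @ge0_ler_powR R p (ltW p0) _ _ _ _ H.
rewrite -powRrM mulVf ?gt_eqF // powRr1; last first.
  by apply: addr_ge0; apply: mulr_ge0; rewrite ?subr_ge0 ?powR_ge0.
apply; rewrite nnegrE ?powR_ge0 //.
by apply: addr_ge0; apply: mulr_ge0; rewrite ?subr_ge0.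
Qed.

Lemma phi_cvx (R : realType) (p u v : R) : 1 <= p -> 0 <= u -> u <= v -> v <= 2^-1 ->
  v `^ p + (1 - v) `^ p <= u `^ p + (1 - u) `^ p.
Proof.
move=> p1 u0 uv v2.
have [u2|u2] := eqVneq u (2^-1).
  have -> : v = u by apply/le_anti; rewrite uv u2 v2.
  by [].
have u2' : u < 2^-1 by rewrite lt_neqAle u2 (le_trans uv v2).
pose l := (1 - u - v) / (1 - 2 * u).
have d0 : 0 < 1 - 2 * u by lra.
have l0 : 0 <= l by rewrite /l divr_ge0 //; lra.
have l1 : l <= 1 by rewrite /l ler_pdivrMr // mul1r; lra.
have ev : v = l * u + (1 - l) * (1 - u).
  rewrite /l; field; lra.
have ev' : 1 - v = l * (1 - u) + (1 - l) * u.
  rewrite /l; field; lra.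
have u1 : 0 <= 1 - u by lra.
have h1 := conv_pow p1 l0 l1 u0 u1.
have h2 := conv_pow p1 l0 l1 u1 u0.
rewrite {1}ev ev'.
apply: le_trans (lerD h1 h2) _.
by rewrite le_eqVlt; apply/orP; left; apply/eqP; ring.
Qed.

Lemma phi_ccv (R : realType) (p u v : R) : 0 < p -> p <= 1 -> 0 <= u -> u <= v -> v <= 2^-1 ->
  u `^ p + (1 - u) `^ p <= v `^ p + (1 - v) `^ p.
Proof.
move=> p0 p1 u0 uv v2.
have [u2|u2] := eqVneq u (2^-1).
  have -> : v = u by apply/le_anti; rewrite uv u2 v2.
  by [].
have u2' : u < 2^-1 by rewrite lt_neqAle u2 (le_trans uv v2).
pose l := (1 - u - v) / (1 - 2 * u).
have d0 : 0 < 1 - 2 * u by lra.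
have l0 : 0 <= l by rewrite /l divr_ge0 //; lra.
have l1 : l <= 1 by rewrite /l ler_pdivrMr // mul1r; lra.
have ev : v = l * u + (1 - l) * (1 - u).
  rewrite /l; field; lra.
have ev' : 1 - v = l * (1 - u) + (1 - l) * u.
  rewrite /l; field; lra.
have u1 : 0 <= 1 - u by lra.
have h1 := conc_pow p0 p1 l0 l1 u0 u1.
have h2 := conc_pow p0 p1 l0 l1 u1 u0.
rewrite ev' {1}ev.
apply: le_trans (lerD h1 h2).
by rewrite le_eqVlt; apply/orP; left; apply/eqP; ring.
Qed.

Lemma invpow (R : realType) (y r : R) : 0 <= y -> (y^-1) `^ r = (y `^ r)^-1.
Proof. by move=> y0; rewrite -powR_inv1 // -powRrM mulN1r powRN. Qed.

Definition F (R : realType) (a e : R) :=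
  (1 + e `^ (a + 1)) `^ (1 / a) / (1 + e) `^ ((a + 1) / a).

Lemma F_phi (R : realType) (a e : R) : 0 <= e ->
  F a e = ((e / (1 + e)) `^ (a + 1) + (1 - e / (1 + e)) `^ (a + 1)) `^ (1 / a).
Proof.
move=> e0.
have e1 : 0 < 1 + e by lra.
have -> : 1 - e / (1 + e) = (1 + e)^-1 by field; lra.
have i0 : 0 <= (1 + e)^-1 by rewrite invr_ge0 ltW.
rewrite (powRM _ e0 i0) invpow ?ltW //.
rewrite -[X in _ * _ + X]mul1r -mulrDl.
rewrite powRM ?invr_ge0 ?powR_ge0 ?addr_ge0 //.
rewrite invpow ?powR_ge0 // -powRrM /F mul1r.
rewrite (addrC 1 (e `^ _)) //.
all: try exact: powR_ge0.
all: try lra.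
Qed.

Lemma powRN' (R : realType) (x r : R) : x `^ r = (x `^ (- r))^-1.
Proof. by rewrite -powRN opprK. Qed.

Lemma F_mono (R : realType) (a t e : R) : -1 < a -> a != 0 -> 0 <= t -> t <= e -> e <= 1 ->
  F a e <= F a t.
Proof.
move=> a1 a0 t0 te e1.
have e0 : 0 <= e by lra.
rewrite (F_phi a e0) (F_phi a t0).
set ut := t / (1 + t); set ue := e / (1 + e).
have ut0 : 0 <= ut by rewrite /ut divr_ge0 //; lra.
have ute : ut <= ue.
  rewrite /ut /ue ler_pdivrMr; last lra.
  rewrite mulrAC ler_pdivlMr; last lra.
  nra.
have ue2 : ue <= 2^-1.
  rewrite /ue ler_pdivrMr; last lra.
  lra.
have pos : forall u : R, 0 <= u -> u <= 2^-1 -> 0 < u `^ (a + 1) + (1 - u) `^ (a + 1).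
  move=> u u0 u2; apply: ltr_wpDl; first exact: powR_ge0.
  by apply: powR_gt0; lra.
have P1 : (ut `^ (a + 1) + (1 - ut) `^ (a + 1)) \is Num.nneg.
  by rewrite nnegrE; apply: ltW; apply: pos => //; apply: le_trans ute ue2.
have P2 : (ue `^ (a + 1) + (1 - ue) `^ (a + 1)) \is Num.nneg.
  by rewrite nnegrE; apply: ltW; apply: pos => //; apply: le_trans ut0 ute.
have [ap|an] := ltP 0 a.
  have p1 : 1 <= a + 1 by lra.
  have H := phi_cvx p1 ut0 ute ue2.
  have a1' : 0 <= 1 / a by rewrite divr_ge0 // ltW.
  exact: (ge0_ler_powR a1' P2 P1 H).
have an' : a < 0 by rewrite lt_neqAle a0 an.
have p0 : 0 < a + 1 by lra.
have p1 : a + 1 <= 1 by lra.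
have H := phi_ccv p0 p1 ut0 ute ue2.
have a1' : 0 <= - (1 / a) by rewrite oppr_ge0 mul1r invr_le0 ltW.
have H2 := ge0_ler_powR a1' P1 P2 H.
rewrite !(powRN' _ (1 / a)) lef_pV2.
- exact: H2.
- rewrite posrE; apply: powR_gt0; apply: pos => //; exact: le_trans ut0 ute.
- rewrite posrE; apply: powR_gt0; apply: pos => //; exact: le_trans ute ue2.
Qed.
Lemma powR_1r (R : realType) (x r : R) : 0 < x -> x `^ (1 + r) = x * x `^ r.
Proof.
move=> x0; rewrite powRD ?powRr1 ?ltW //.
by apply/implyP => _; rewrite gt_eqF.
Qed.

Lemma psi01 (R : realType) (a t : R) : -1 < a -> a != 0 -> 0 < t ->
  t `^ a = (1 + a * (t + 1))^-1 -> psi0 a t = psi1 a t.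
Proof.
move=> a1 a0 t0 ht.
set D := 1 + a * (t + 1).
have D0 : 0 < D.
  by rewrite -invr_gt0 -ht powR_gt0.
have a10 : 0 < a + 1 by lra.
have t10 : 0 < 1 + t by lra.
have tp : t `^ (a + 1) = t * D^-1 by rewrite addrC powR_1r // ht.
have e1 : (a + 1) / a = 1 + 1 / a by field.
have X : 1 + t * D^-1 = (a + 1) * (1 + t) * D^-1.
  rewrite /D; field; rewrite -/D; lra.
have tD : (D^-1) `^ (1 / a) = t.
  by rewrite -ht -powRrM mulrC mul1r mulVf // powRr1 // ltW.
rewrite /psi0 /psi1 tp X e1 !powR_1r //.
rewrite !powRM ?mulr_ge0 ?invr_ge0 ?ltW // tD.
set K := (a + 1) `^ (1 / a).
set S := (1 + t) `^ (1 / a).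
have S0 : 0 < S by apply: powR_gt0.
rewrite /D; field.
rewrite a0 !gt_eqF // -/D //.
Qed.

Lemma cont_powR (R : realType) (r y : R) : 0 < y -> {for y, continuous (fun z : R => z `^ r)}.
Proof.
move=> y0; apply: differentiable_continuous; apply/derivable1_diffP.
by apply: derivable_powR; rewrite in_itv /= y0.
Qed.

Lemma cvg_psi0 (R : realType) (F : set_system R) (FF : Filter F) (a x : R) :
  0 <= x -> (fun e => e) @ F --> x -> (fun e => e `^ (a + 1)) @ F --> x `^ (a + 1) ->
  psi0 a e @[e --> F] --> psi0 a x.
Proof.
move=> x0 hx hp.
have h1 : (fun e => 1 + e `^ (a + 1)) @ F --> 1 + x `^ (a + 1).
  by apply: cvgD => //; exact: cvg_cst.
have h2 : (fun e => 1 + e) @ F --> 1 + x.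
  by apply: cvgD => //; exact: cvg_cst.
have p1 : 0 < 1 + x `^ (a + 1) by have := powR_ge0 x (a + 1); lra.
have p2 : 0 < 1 + x by lra.
have h3 : (fun e => (1 + e `^ (a + 1)) `^ (1 / a)) @ F --> (1 + x `^ (a + 1)) `^ (1 / a).
  exact: (continuous_cvg _ (@cont_powR _ (1 / a) _ p1) h1).
have h4 : (fun e => (1 + e) `^ ((a + 1) / a)) @ F --> (1 + x) `^ ((a + 1) / a).
  exact: (continuous_cvg _ (@cont_powR _ ((a + 1) / a) _ p2) h2).
apply: cvgD.
  apply: cvgM => //; apply: cvgV => //; apply: lt0r_neq0; exact: powR_gt0.
apply: cvgMl_tmp; apply: cvgB; apply: cvgV => //; exact: lt0r_neq0.
Qed.

Lemma psi0_within (R : realType) (a t : R) : -1 < a -> 0 < t ->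
  {within `[0, t], continuous (psi0 a)}.
Proof.
move=> a1 t0.
have cpos : forall x : R, 0 < x -> {for x, continuous (psi0 a)}.
  move=> x x0; apply: cvg_psi0; first exact: ltW.
    exact: cvg_id.
  exact: (@cont_powR _ (a + 1) _ x0).
apply/continuous_within_itvP => //; split.
- move=> x; rewrite in_itv /= => /andP[x0 _]; exact: cpos.
- apply: cvg_psi0 => //.
    by apply: cvg_at_right_filter; exact: cvg_id.
  rewrite powR0; last by apply: lt0r_neq0; lra.
  apply: powR_cvg0; lra.
- exact: cvg_at_left_filter (cpos _ t0).
Qed.

Theorem corollary2p4 (R : realType) (a eta1 : R) :
  -1 < a -> a != 0 ->
  0 < eta1 < 1 ->
  eta1 `^ a = (1 + a * (eta1 + 1))^-1 ->
  exists2 es : R, 0 <= es <= eta1 &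
    (forall e : R, 0 <= e <= eta1 -> psi0 a e <= psi0 a es) /\
    (forall e : R, 0 <= e <= 1 -> psi a eta1 e <= psi0 a es).
Proof.
move=> a1 a0 /andP[t0 t1] ht.
have [es esI esM] := EVT_max (ltW t0) (psi0_within a1 t0).
move: esI; rewrite in_itv /= => esI.
exists es => //.
have M : forall e : R, 0 <= e <= eta1 -> psi0 a e <= psi0 a es.
  by move=> e eI; apply: esM; rewrite in_itv.
split => // e /andP[e0 e1].
rewrite /psi; case: ifP => het.
  by apply: M; rewrite e0 het.
have te : eta1 <= e by move/negbT: het; rewrite -ltNge => /ltW.
apply: le_trans (M eta1 _); last by rewrite lexx ltW.
rewrite psi01 //.
rewrite /psi1 -[X in 2 * X <= _]/(F a e) -[X in _ <= 2 * X]/(F a eta1).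
rewrite ler_pM2l; last lra.
exact: F_mono (ltW t0) te e1.
Qed.
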